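(* Let $f:\mathbb{R}^n\to\mathbb{R}$ be a continuously differentiable convex function, and $s$ a positive integer. Let $h(x)=\sum_{i=1}^n h_i(x_i)$ with each $h_i:\mathbb{R}\to\mathbb{R}$ convex and continuously differentiable, with $h$ supercoercive ($\lim_{\|x\|\to\infty}h(x)/\|x\|=\infty$), and assume: (i) if $x_k\to x$ then $D_h(x,x_k)\to0$; (ii) if $D_h(x,x_k)\to0$ for some $x$, then $x_k\to x$; (iii) if $D_h(x_{k+1},x_k)\to0$ then $\|x_{k+1}-x_k\|\to0$. Assume $L_hh-f$ is convex for some $L_h>0$ and $L>L_h$. Let $(x_k)$ be generated by the BPG algorithm with $h$ and $L$, and assume $(x_k)$ is bounded. Then $f(x_k)$ converges to a limit $f^*$ and there exist $K\in\mathbb{N}$ and $c>0$ such that $f(x_k)-f^*\le c/k$ for all $k\ge K$.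
   Context: $C_s=\{x\in\mathbb{R}^n:\|x\|_0\le s\}$ where $\|x\|_0$ is the number of nonzero entries. $D_h(y,x)=h(y)-h(x)-\nabla h(x)^T(y-x)$. BPG algorithm: start from $x_0\in C_s$ and for $k\ge0$ pick $x_{k+1}\in\operatorname{argmin}_{x\in C_s}\ \nabla f(x_k)^T(x-x_k)+LD_h(x,x_k)$. *)

(* Defs.v *)
(* Vectors of R^n are row vectors 'rV[R]_n (max-norm; all norms on R^n are
   equivalent, so every topological/metric notion used here is unaffected). *)
From HB Require Import structures.
From mathcomp Require Import all_boot all_order all_algebra.
From mathcomp Require Import all_classical all_reals all_analysis.
Set Implicit Arguments. Unset Strict Implicit. Unset Printing Implicit Defensive.
Import Order.TTheory GRing.Theory Num.Theory.
Import numFieldNormedType.Exports.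
Local Open Scope ring_scope.
Local Open Scope classical_set_scope.

Definition grad (R : realType) (n : nat) (f : 'rV[R]_n -> R^o) (x : 'rV[R]_n)
  : 'rV[R]_n := \row_i ('d f x (delta_mx 0 i)).

Definition dotv (R : realType) (n : nat) (u v : 'rV[R]_n) : R :=
  \sum_(i < n) u 0 i * v 0 i.

Definition C1 (R : realType) (n : nat) (f : 'rV[R]_n -> R^o) : Prop :=
  (forall x, differentiable f x) /\ continuous (grad f).

Definition C1R (R : realType) (g : R -> R) : Prop :=
  (forall x : R, derivable g x 1) /\ continuous (g^`()).

Definition convexR (R : realType) (n : nat) (f : 'rV[R]_n -> R^o) : Prop :=
  convex_function (setT : set (convex_lmodType 'rV[R]_n)) f.
Definition convex1 (R : realType) (g : R -> R^o) : Prop :=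
  convex_function (setT : set (convex_lmodType R^o)) g.

Definition Dh (R : realType) (n : nat) (h : 'rV[R]_n -> R^o) (y x : 'rV[R]_n) : R :=
  h y - h x - dotv (grad h x) (y - x).

Definition l0 (R : realType) (n : nat) (x : 'rV[R]_n) : nat :=
  #|[set i : 'I_n | x 0 i != 0]|.
Definition Cs (R : realType) (n : nat) (s : nat) : set 'rV[R]_n :=
  [set x | (l0 x <= s)%N].

Definition supercoercive (R : realType) (n : nat) (h : 'rV[R]_n -> R) : Prop :=
  forall M : R, exists r : R, forall x : 'rV[R]_n, r < `|x| -> M * `|x| <= h x.

Definition BPG_objective (R : realType) (n : nat) (f h : 'rV[R]_n -> R^o) (L : R)
  (xk x : 'rV[R]_n) : R := dotv (grad f xk) (x - xk) + L * Dh h x xk.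

Definition BPG_sequence (R : realType) (n s : nat) (f h : 'rV[R]_n -> R^o) (L : R)
  (xs : nat -> 'rV[R]_n) : Prop :=
  Cs (R:=R) s (xs 0%N) /\
  forall k : nat, Cs (R:=R) s (xs k.+1) /\
    forall y, Cs (R:=R) s y -> BPG_objective f h L (xs k) (xs k.+1) <= BPG_objective f h L (xs k) y.

(* Main.v *)
Require Import Defs.
From HB Require Import structures.
From mathcomp Require Import all_boot all_order all_algebra.
From mathcomp Require Import all_classical all_reals all_analysis.
From mathcomp.algebra_tactics Require Import ring lra.
Import Order.TTheory GRing.Theory Num.Theory.
Import numFieldNormedType.Exports.
Local Open Scope ring_scope.
Local Open Scope classical_set_scope.
Local Open Scope convex_scope.

Section Helpers.
Context {R : realType} {n : nat}.
Implicit Types (u v w : 'rV[R]_n).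

Lemma dotvD u v w : dotv u (v + w) = dotv u v + dotv u w.
Proof. by rewrite /dotv -big_split; apply: eq_bigr => i _; rewrite mxE mulrDr. Qed.
Lemma dotvN u v : dotv u (- v) = - dotv u v.
Proof. by rewrite /dotv -sumrN; apply: eq_bigr => i _; rewrite mxE mulrN. Qed.
Lemma dotvB u v w : dotv u (v - w) = dotv u v - dotv u w.
Proof. by rewrite dotvD dotvN. Qed.
Lemma dotvZ u (a : R) v : dotv u (a *: v) = a * dotv u v.
Proof. by rewrite /dotv mulr_sumr; apply: eq_bigr => i _; rewrite mxE mulrCA. Qed.
Lemma dotv0 u : dotv u 0 = 0.
Proof. by rewrite /dotv big1 // => i _; rewrite mxE mulr0. Qed.

Lemma diff_dotv (g : 'rV[R]_n -> R^o) x d : 'd g x d = dotv (grad g x) d.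
Proof.
rewrite {1}(row_sum_delta d) linear_sum /dotv; apply: eq_bigr => i _.
by rewrite linearZ /= mxE mulrC.
Qed.

Lemma coord_le v i : `|v 0 i| <= `|v|.
Proof.
have /mapP[j Hj ->] : `|v ord0 i| \in [seq `|v x.1 x.2| | x : 'I_1 * 'I_n].
  by apply/mapP; exists (ord0, i) => //=; rewrite mem_enum.
by rewrite [leRHS]/Num.norm /= mx_normrE; apply/bigmax_geP; right => /=; exists j.
Qed.



Lemma quot_cvg (g : 'rV[R]_n -> R^o) x d : differentiable g x ->
  (fun t : R => (g (x + t *: d) - g x) / t) @ 0^'+ --> 'd g x d.
Proof.
move=> dg.
have dd := @diff_derivable _ _ _ _ _ d dg.
rewrite -deriveE //.
have sub : (0:R)^'+ `=>` (0:R)^'.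
  move=> A; rewrite /at_right /dnbhs /within /=; apply: filterS => y Hy y0.
  by apply: Hy; rewrite gt_eqF.
have -> : (fun t : R => (g (x + t *: d) - g x) / t) =
   (fun h : R => h^-1 *: ((g \o shift x) (h *: d) - g x)).
  by rewrite funeqE => t /=; rewrite mulrC [x + _]addrC.
exact: (cvg_trans (cvg_app _ sub) dd).
Qed.

Lemma quot_le (q : R -> R) l c : q @ 0^'+ --> l ->
  (forall t, 0 < t <= 1 -> q t <= c) -> l <= c.
Proof.
move=> ql H; apply: (cvgr_to_le ql).
near=> t; apply: H; apply/andP; split; near: t.
  exact: nbhs_right_gt.
exact: nbhs_right_le.
Unshelve. all: end_near.
Qed.

Lemma quot_ge (q : R -> R) l c : q @ 0^'+ --> l ->
  (forall t, 0 < t <= 1 -> c <= q t) -> c <= l.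
Proof.
move=> ql H; apply: (cvgr_to_ge ql).
near=> t; apply: H; apply/andP; split; near: t.
  exact: nbhs_right_gt.
exact: nbhs_right_le.
Unshelve. all: end_near.
Qed.

Definition chord (g : 'rV[R]_n -> R) := forall x y (t : R), 0 <= t <= 1 ->
  g (x + t *: (y - x)) <= g x + t * (g y - g x).

Lemma convexR_chord (g : 'rV[R]_n -> R^o) : convexR g -> chord g.
Proof.
move=> cg x y t /andP[t0 t1].
have := cg (Itv01 t0 t1) y x.
rewrite !inE /= => /(_ I I).
rewrite convRE /=.
rewrite [X in g X <= _ -> _](_ : _ = x + t *: (y - x)); last first.
  change (t *: y + (1 - t) *: x = x + t *: (y - x)).
  by rewrite scalerBl scale1r scalerBr addrCA.
move=> H; apply: le_trans H _; rewrite /unstable.onem; lra.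
Qed.


Lemma grad_ineq (g : 'rV[R]_n -> R^o) x y : differentiable g x -> chord g ->
  dotv (grad g x) (y - x) <= g y - g x.
Proof.
move=> dg cg; rewrite -diff_dotv.
apply: (quot_le _ _ _ (quot_cvg _ _ (y - x) dg)) => t /andP[t0 t1].
rewrite ler_pdivrMr // mulrC.
have := cg x y t; rewrite ltW // t1 => /(_ isT); lra.
Qed.

Variable hi : 'I_n -> R -> R^o.
Let h : 'rV[R]_n -> R^o := fun x => \sum_(i < n) hi i (x 0 i).

Lemma h_chord : (forall i, convex1 (hi i)) -> chord h.
Proof.
move=> ch x y t /andP[t0 t1].
rewrite /h -sumrB mulr_sumr -big_split /=; apply: ler_sum => i _.
have := ch i (Itv01 t0 t1) (y 0 i) (x 0 i).
rewrite !inE /= => /(_ I I).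
rewrite convRE /= !mxE.
rewrite [X in hi i X <= _ -> _](_ : _ = x 0 i + t * (y 0 i - x 0 i)); last first.
  change (t * y 0 i + (1 - t) * x 0 i = x 0 i + t * (y 0 i - x 0 i)); ring.
move=> H; apply: le_trans H _; rewrite /unstable.onem; lra.
Qed.

Lemma h_diff : (forall i, C1R (hi i)) -> forall x, differentiable h x.
Proof.
move=> C x.
have -> : h = \sum_(i < n) (fun y : 'rV[R]_n => hi i (y 0 i)).
  by rewrite fct_sumE.
apply: differentiable_sum => i.
apply: (@differentiable_comp _ _ _ _ (fun y : 'rV[R]_n => y 0 i) (hi i)).
  exact: differentiable_coord.
by apply/derivable1_diffP; case: (C i).
Qed.

End Helpers.

Section Helpers2.
Context {R : realType} {n : nat}.

Lemma ev_ex (P : nat -> Prop) : (\forall m \near \oo, P m) ->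
  exists N, forall m, (N <= m)%N -> P m.
Proof. by case => N _ H; exists N => m Nm; apply: H. Qed.

Lemma harm_cvg {V : normedModType R} (y : nat -> V) (a : V) :
  (forall m, `|a - y m| < (m.+1%:R)^-1) -> y @ \oo --> a.
Proof.
move=> H; apply/cvgrPdist_lt => e e0.
near=> m; apply: lt_trans (H m) _.
rewrite invf_plt ?posrE ?ltr0Sn //.
apply: (@le_lt_trans _ _ (m%:R)); last by rewrite ltr_nat.
near: m; exact: nbhs_infty_ger.
Unshelve. all: end_near.
Qed.

Lemma supp_eps (v : 'rV[R]_n) :
  exists2 e : R, 0 < e & forall i, v 0 i != 0 -> e <= `|v 0 i|.
Proof.
exists (\big[Order.min/1]_(i | v 0 i != 0) `|v 0 i|).
  by apply: lt_bigmin => // i; rewrite normr_gt0.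
by move=> i Hi; exact: bigmin_le_cond.
Qed.

Lemma supp_close (v y : 'rV[R]_n) e :
  (forall i, v 0 i != 0 -> e <= `|v 0 i|) -> `|y - v| < e ->
  forall i, v 0 i != 0 -> y 0 i != 0.
Proof.
move=> He Hy i vi; apply/negP => /eqP y0.
have := coord_le (y - v) i; rewrite !mxE y0 sub0r normrN => H.
have := He i vi; lra.
Qed.

End Helpers2.

Section H3.
Context {R : realType} {n : nat}.

Lemma desc_core (a b fx fy gx gy Lh : R) :
  Lh * a - b <= Lh * gy - fy - (Lh * gx - fx) -> fy <= fx + b + Lh * (gy - gx - a).
Proof. lra. Qed.

Lemma quot_core (Lh t gt gx ft fx c : R) : 0 < t ->
  Lh * gt - ft <= Lh * gx - fx + t * c ->
  Lh * ((gt - gx) / t) - (ft - fx) / t <= c.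
Proof.
move=> t0 H.
have -> : Lh * ((gt - gx) / t) - (ft - fx) / t = ((Lh * gt - ft) - (Lh * gx - fx)) / t.
  by field; rewrite gt_eqF.
rewrite ler_pdivrMr // mulrC; lra.
Qed.

Lemma descent_gen (g f : 'rV[R]_n -> R^o) (Lh : R) (x y : 'rV[R]_n) :
  differentiable g x -> differentiable f x ->
  chord (fun x => Lh * g x - f x) ->
  f y <= f x + dotv (grad f x) (y - x) + Lh * Dh g y x.
Proof.
move=> dg df cg.
have Qh := quot_cvg g x (y - x) dg.
have Qf := quot_cvg f x (y - x) df.
have Q := cvgB (F:= (0:R)^'+) (cvgMl_tmp (F:=(0:R)^'+) (a:=Lh) Qh) Qf.
have key : Lh * 'd g x (y - x) - 'd f x (y - x) <= (Lh * g y - f y) - (Lh * g x - f x).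
  apply: (quot_le _ _ _ (Q _ _)) => t /andP[t0 t1] /=.
  apply: quot_core => //.
  have := cg x y t; rewrite ltW // t1 => /(_ isT) /=.
  by rewrite mulrC.
rewrite (diff_dotv g) (diff_dotv f) in key.
rewrite /Dh; exact: desc_core key.
Qed.

End H3.

Section H4.
Context {R : realType} {n : nat}.

Lemma dotv_lin (p z d x : 'rV[R]_n) (t : R) :
  dotv p (z + t *: d - x) = dotv p (z - x) + t * dotv p d.
Proof. by rewrite addrAC [LHS]dotvD dotvZ. Qed.

Lemma dotv_split (p u z x : 'rV[R]_n) :
  dotv p (u - x) = dotv p (z - x) + dotv p (u - z).
Proof.
rewrite -dotvD; congr (dotv _ _).
by rewrite [RHS]addrC addrA subrK.
Qed.

Lemma tp_core (L t P G pd gd hz hx hy : R) : 0 < L -> 0 < t ->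
  P + L * (hz - hx - G) <= P + t * pd + L * (hy - hx - (G + t * gd)) ->
  - (pd - L * gd) / L <= (hy - hz) / t.
Proof.
move=> L0 t0 H.
rewrite ler_pdivrMr // mulrAC ler_pdivlMr //.
lra.
Qed.

Lemma fin_core (L Lh fz fx fu Pz pd Dzx hz hx hu Gz gxd gzd : R) : 0 < L ->
  fz <= fx + Pz + Lh * Dzx -> Lh * Dzx <= L * Dzx ->
  fx + (Pz + pd) <= fu ->
  - (pd - L * gxd) / L <= gzd ->
  Dzx = hz - hx - Gz ->
  fz <= fu + L * ((hu - hx - (Gz + gxd)) - (hu - hz - gzd)).
Proof.
move=> L0 H1 H2 H3 H4 H5.
rewrite ler_pdivrMr // in H4.
rewrite H5 in H1 H2.
lra.
Qed.


Lemma tp_core2 (L t P G pd gd hz hx hy A B : R) : 0 < L -> 0 < t ->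
  A = P + t * pd -> B = G + t * gd ->
  P + L * (hz - hx - G) <= A + L * (hy - hx - B) ->
  - (pd - L * gd) / L <= (hy - hz) / t.
Proof. by move=> L0 t0 -> ->; exact: tp_core. Qed.

Lemma fin_core2 (L Lh fz fx fu Pz pd Dzx hz hx hu Gz gxd gzd Pu Gu Dux Duz dz : R) :
  0 < L -> fz <= fx + Pz + Lh * Dzx -> Lh * Dzx <= L * Dzx ->
  fx + Pu <= fu -> Pu = Pz + pd ->
  - (pd - L * gxd) / L <= dz -> dz = gzd ->
  Dzx = hz - hx - Gz -> Dux = hu - hx - Gu -> Gu = Gz + gxd ->
  Duz = hu - hz - gzd ->
  fz <= fu + L * (Dux - Duz).
Proof.
move=> L0 H1 H2 H3 E1 H4 E2 E3 E4 E5 E6.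
subst Pu dz Dux Gu Duz.
rewrite ler_pdivrMr // in H4.
rewrite E3 in H1 H2.
lra.
Qed.

Lemma DhE (h : 'rV[R]_n -> R^o) y x : Dh h y x = h y - h x - dotv (grad h x) (y - x).
Proof. by []. Qed.
End H4.
Arguments tp_core2 {R L t P G pd gd hz hx hy A B}.
Arguments fin_core2 {R L Lh fz fx fu Pz pd Dzx hz hx hu Gz gxd gzd Pu Gu Dux Duz dz}.

Section H5.
Context {R : realType} {n : nat}.
Lemma three_point (f h : 'rV[R]_n -> R^o) (L Lh : R) (x z u : 'rV[R]_n) :
  0 < L -> Lh <= L -> differentiable h z ->
  (forall t, 0 < t <= 1 -> BPG_objective f h L x z <= BPG_objective f h L x (z + t *: (u - z))) ->
  f z <= f x + dotv (grad f x) (z - x) + Lh * Dh h z x ->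
  f x + dotv (grad f x) (u - x) <= f u ->
  0 <= Dh h z x ->
  f z <= f u + L * (Dh h u x - Dh h u z).
Proof.
move=> L0 LhL dh opt desc fconv D0.
have key : - (dotv (grad f x) (u - z) - L * dotv (grad h x) (u - z)) / L <= 'd h z (u - z).
  apply: (quot_ge _ _ _ (quot_cvg h z (u - z) dh)) => t /andP[t0 t1].
  have H := opt t ltac:(by rewrite t0 t1).
    exact: (tp_core2 L0 t0 (dotv_lin _ _ _ _ _) (dotv_lin _ _ _ _ _) H).
have LD : Lh * Dh h z x <= L * Dh h z x by apply: ler_wpM2r.
exact: (fin_core2 L0 desc LD fconv (dotv_split _ _ z _) key (diff_dotv _ _ _) (DhE _ _ _) (DhE _ _ _) (dotv_split _ _ z _) (DhE _ _ _)).
Qed.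
End H5.

Section H6.
Context {R : realType} {n : nat}.

Lemma le_sub_add (a b c : R) : a <= b - c -> c + a <= b.
Proof. lra. Qed.

Lemma obj_self (f h : 'rV[R]_n -> R^o) L x : BPG_objective f h L x x = 0.
Proof. by rewrite /BPG_objective /Dh !subrr !dotv0 subrr mulr0 addr0. Qed.

Lemma step_core (fz fx P L Lh D : R) :
  fz <= fx + P + Lh * D -> P + L * D <= 0 -> fz <= fx - (L - Lh) * D.
Proof. lra. Qed.

Lemma mono_core (fz fx L Lh D : R) :
  0 <= D -> Lh <= L -> fz <= fx - (L - Lh) * D -> fz <= fx.
Proof.
move=> D0 LL H.
have : 0 <= (L - Lh) * D by apply: mulr_ge0 => //; rewrite subr_ge0.
lra.
Qed.

Lemma cs_seg s (z u : 'rV[R]_n) (t : R) :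
  (forall i, u 0 i != 0 -> z 0 i != 0) -> Cs s z -> Cs s (z + t *: (u - z)).
Proof.
move=> supp Hz; rewrite /Cs /l0 /=.
apply: leq_trans _ Hz.
apply: subset_leq_card.
apply/fintype.subsetP => i.
rewrite !in_setE /= !mxE; apply: contraNN => /eqP z0.
case: (eqVneq (u 0 i) 0) => [u0|/supp]; last by rewrite z0 eqxx.
by rewrite z0 u0 subrr mulr0 addr0.
Qed.

End H6.

Lemma dist_core {R : realType} (a b c e : R) : a <= c -> c <= b ->
  `|a - b| < e -> `|a - c| < e.
Proof.
move=> ac cb; rewrite (distrC a b) (distrC a c) !ger0_norm ?subr_ge0 //;
  [lra | exact: le_trans cb].
Qed.

Section H7.
Context {R : realType}.

Lemma Dcore (D fk fk1 fs e c : R) : 0 < c -> 0 <= D ->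
  fk1 <= fk - c * D -> fs <= fk1 -> `|fs - fk| < e * c -> `|0 - D| < e.
Proof.
move=> c0 D0 H1 H2 H3.
rewrite sub0r normrN ger0_norm //.
rewrite distrC ger0_norm in H3; last by rewrite subr_ge0; apply: le_trans H2 _; apply: le_trans H1 _; rewrite lerBlDr lerDl mulr_ge0 // ltW.
have : c * D < c * e by lra.
by rewrite ltr_pM2l.
Qed.

Lemma ind_core (i : nat) (L Dj Dj1 DK fj fj1 fs : R) : 0 < L ->
  fj1 <= fs + L * (Dj - Dj1) -> fs <= fj1 -> fj1 <= fj -> Dj <= DK ->
  i%:R * (fj - fs) <= L * (DK - Dj) ->
  Dj1 <= DK /\ i.+1%:R * (fj1 - fs) <= L * (DK - Dj1).
Proof.
move=> L0 T G M1 IH1 IH2.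
have : 0 <= L * (Dj - Dj1) by lra.
rewrite pmulr_rge0 // subr_ge0 => DD.
split; first exact: le_trans DD IH1.
have : i%:R * (fj1 - fs) <= i%:R * (fj - fs) by apply: ler_wpM2l; [exact: ler0n | lra].
rewrite -addn1 natrD; lra.
Qed.

Lemma final_core (i K : nat) (L DK Di fk fs : R) : (K.*2.+1 <= i + K)%N ->
  0 < L -> 0 <= Di -> fs <= fk -> i%:R * (fk - fs) <= L * (DK - Di) ->
  fk - fs <= (2 * (L * DK) + 1) / (i + K)%:R.
Proof.
move=> HK L0 D0 fsk H.
have ipos : (0 < i + K)%N by apply: leq_trans HK.
rewrite ler_pdivlMr ?ltr0n //.
have iK : ((i + K) <= 2 * i)%N.
  by rewrite -addnn in HK; rewrite mul2n -addnn leq_add2l; apply: ltnW; rewrite -(ltn_add2r K) (leq_trans _ HK) // addSn ltnS leqnn.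
have : (fk - fs) * (i + K)%:R <= (fk - fs) * (2 * i%:R).
  apply: ler_wpM2l; first lra.
  by rewrite -natrM ler_nat.
have : 0 <= L * Di by apply: mulr_ge0 => //; exact: ltW.
lra.
Qed.

Lemma tri_core {n : nat} (a b c : 'rV[R]_n) e :
  `|a - b| < e / 2 -> `|b - c| < e / 2 -> `|a - c| < e.
Proof.
move=> H1 H2; apply: le_lt_trans (ler_distD b a c) _; lra.
Qed.

Lemma norm_core {n : nat} (v : 'rV[R]_n) (e : R) : `|0 - `|v| | < e -> `|v| < e.
Proof. by rewrite sub0r normrN normr_id. Qed.

End H7.

Local Close Scope convex_scope.

Theorem corollaryA6 (R : realType) (n s : nat)
  (f : 'rV[R]_n -> R^o) (hi : 'I_n -> R -> R^o) (Lh L : R)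
  (xs : nat -> 'rV[R]_n) :
  let h : 'rV[R]_n -> R^o := fun x => \sum_(i < n) hi i (x 0 i) in
  C1 f -> convexR f -> (0 < s)%N ->
  (forall i, convex1 (hi i) /\ C1R (hi i)) ->
  supercoercive h ->
  (forall (y : nat -> 'rV[R]_n) (x : 'rV[R]_n),
      y @ \oo --> x -> (fun k => Dh h x (y k)) @ \oo --> (0 : R)) ->
  (forall (y : nat -> 'rV[R]_n) (x : 'rV[R]_n),
      (fun k => Dh h x (y k)) @ \oo --> (0 : R) -> y @ \oo --> x) ->
  (forall y : nat -> 'rV[R]_n,
      (fun k => Dh h (y k.+1) (y k)) @ \oo --> (0 : R) ->
      (fun k => `|y k.+1 - y k|) @ \oo --> (0 : R)) ->
  0 < Lh -> convexR (fun x => Lh * h x - f x) -> Lh < L ->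
  BPG_sequence s f h L xs ->
  (exists M : R, forall k, `|xs k| <= M) ->
  exists fstar : R,
    (fun k => f (xs k)) @ \oo --> fstar /\
    exists (K : nat) (c : R), 0 < c /\
      forall k : nat, (K <= k)%N -> f (xs k) - fstar <= c / k%:R.
Proof.
move=> h Cf cvf s0 Chi hsc Hi Hii Hiii Lh0 cvg2 LhL [x0Cs Hbpg] [M HM].
have L0 : 0 < L by apply: lt_trans LhL.
have LhLe : Lh <= L := ltW LhL.
have Hdh : forall x, differentiable h x := h_diff hi (fun i => (Chi i).2).
have Hch : chord h := h_chord hi (fun i => (Chi i).1).
have Dge0 : forall y x, 0 <= Dh h y x.
  by move=> y x; rewrite /Dh subr_ge0; exact: grad_ineq.
have fconv : forall x y, f x + dotv (grad f x) (y - x) <= f y.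
  by move=> x y; apply: le_sub_add; exact: grad_ineq (Cf.1 x) (convexR_chord _ cvf).
have descent : forall x y, f y <= f x + dotv (grad f x) (y - x) + Lh * Dh h y x.
  by move=> x y; exact: descent_gen (Hdh x) (Cf.1 x) (convexR_chord _ cvg2).
have Cxs : forall k, Cs s (xs k) by case => [|k] //; case: (Hbpg k).
have step : forall k, f (xs k.+1) <= f (xs k) - (L - Lh) * Dh h (xs k.+1) (xs k).
  move=> k; have [_ opt] := Hbpg k; have H := opt _ (Cxs k).
  rewrite obj_self in H.
  exact: step_core (descent _ _) H.
have mono1 : forall k, f (xs k.+1) <= f (xs k).
  by move=> k; apply: mono_core (Dge0 _ _) LhLe (step k).
have mono : forall j i, f (xs (i + j)) <= f (xs j).
  move=> j; elim => [|i IH]; first exact: lexx.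
  exact: le_trans (mono1 (i + j)) IH.
have monole : forall j k, (j <= k)%N -> f (xs k) <= f (xs j).
  by move=> j k /subnK <-; exact: mono.
have tp : forall k (u : 'rV[R]_n), (forall i, u 0 i != 0 -> xs k.+1 0 i != 0) ->
    f (xs k.+1) <= f u + L * (Dh h u (xs k) - Dh h u (xs k.+1)).
  move=> k u supp.
  apply: (three_point f h L Lh (xs k) (xs k.+1) u L0 LhLe (Hdh _) _ (descent _ _) (fconv _ _) (Dge0 _ _)).
  move=> t /andP[t0 t1]; have [Ck opt] := Hbpg k; apply: opt.
  exact: cs_seg.
have [xstar Hcl] : exists xstar : 'rV[R]_n, forall e, 0 < e -> forall N,
    exists k, (N <= k)%N /\ `|xstar - xs k| < e.
  pose A := closed_ball_ (fun v : 'rV[R]_n => `|v|) 0 M.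
  have cA : compact A.
    apply: bounded_closed_compact; last exact: closed_closed_ball_.
    have bA : [bounded x | x in A].
      rewrite /bounded_near; near=> M' => v.
      rewrite /A /closed_ball_ /= sub0r normrN => Hv.
      apply: le_trans Hv _; near: M'; apply: nbhs_pinfty_ge; exact: num_real.
    exact: bA.
  have [] := cA (xs @ \oo) _ _.
  - by exists 0%N => // k _; rewrite /A /closed_ball_ /= sub0r normrN; exact: HM.
  move=> xstar [_ Hc]; exists xstar => e e0 N.
  have [] := Hc (xs @` [set k | (N <= k)%N]) (ball xstar e) _ (nbhsx_ballx xstar e e0).
    by exists N => // k /= Nk; exists k.
  move=> _ [[k Nk <-] Hb]; exists k; split => //.
  by rewrite -ball_normE /ball_ /= in Hb.
have Hex : forall m, exists k, (m <= k)%N /\ `|xstar - xs k| < (m.+1%:R)^-1.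
  by move=> m; apply: Hcl; rewrite invr_gt0 ltr0Sn.
have [phi Hphi] := boolp.choice Hex.
have ycv : (fun m => xs (phi m)) @ \oo --> xstar.
  exact: harm_cvg (fun m => (Hphi m).2).
have fcont : {for xstar, continuous f} := differentiable_continuous (Cf.1 xstar).
have fy : (fun m => f (xs (phi m))) @ \oo --> f xstar.
  exact: (cvg_comp _ _ ycv fcont).
have fge : forall k, f xstar <= f (xs k).
  move=> k; apply: (cvgr_to_le fy); near=> m.
  apply: monole; apply: leq_trans (Hphi m).1.
  near: m; exact: nbhs_infty_ge.
have fcv : (fun k => f (xs k)) @ \oo --> f xstar.
  apply/cvgrPdist_lt => e e0.
  have [N HN] := ev_ex _ ((proj1 (cvgrPdist_lt _ _) fy) e e0).
  near=> k.
  have HN' := HN N (leqnn N); rewrite /= in HN' *.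
  apply: (dist_core _ _ _ _ (fge k) _ HN').
  apply: monole; near: k; exact: nbhs_infty_ge.
have cLh : 0 < L - Lh by rewrite subr_gt0.
have Dcv : (fun k => Dh h (xs k.+1) (xs k)) @ \oo --> (0:R).
  apply/cvgrPdist_lt => e e0.
  have [N HN] := ev_ex _ ((proj1 (cvgrPdist_lt _ _) fcv) (e * (L - Lh)) (mulr_gt0 e0 cLh)).
  near=> k.
  apply: (Dcore _ _ _ _ _ _ cLh (Dge0 _ _) (step k) (fge _)).
  apply: HN; near: k; exact: nbhs_infty_ge.
have [eps eps0 Heps] := supp_eps xstar.
have eps20 : 0 < eps / 2 by rewrite divr_gt0 // ltr0Sn.
have [N1 HN1] : exists N1, forall k, (N1 <= k)%N -> `|xs k.+1 - xs k| < eps / 2.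
  have [N1 HN1] := ev_ex _ ((proj1 (cvgrPdist_lt _ _) (Hiii xs Dcv)) _ eps20).
  by exists N1 => k /HN1 /= /norm_core.
have [del del0 Hdel] : exists2 del : R, 0 < del &
    forall y, Dh h xstar y < del -> `|y - xstar| < eps / 2.
  apply: contrapT => Hn.
  have Hm : forall m : nat, exists y, Dh h xstar y < (m.+1%:R)^-1 /\ eps / 2 <= `|y - xstar|.
    move=> m; apply: contrapT => Hy; apply: Hn; exists (m.+1%:R)^-1.
      by rewrite invr_gt0 ltr0Sn.
    move=> y Dy; rewrite ltNge; apply/negP => He; apply: Hy; by exists y; split.
  have [ysq Hysq] := boolp.choice Hm.
  have Dysq : (fun m => Dh h xstar (ysq m)) @ \oo --> (0:R).
    apply: harm_cvg => m; rewrite sub0r normrN ger0_norm //; exact: (Hysq m).1.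
  have [N HN] := ev_ex _ ((proj1 (cvgrPdist_lt _ _) (Hii ysq xstar Dysq)) _ eps20).
  have := HN N (leqnn N); have := (Hysq N).2; rewrite distrC => H1 H2.
  by have := lt_le_trans H2 H1; rewrite ltxx.
have Dys := Hi _ _ ycv.
have [N2 HN2] := ev_ex _ ((proj1 (cvgrPdist_lt _ _) Dys) del del0).
pose m := maxn N1 N2.
pose K := phi m.
have KN1 : (N1 <= K)%N := leq_trans (leq_maxl N1 N2) (Hphi m).1.
have DK : Dh h xstar (xs K) < del.
  by have := HN2 m (leq_maxr N1 N2); rewrite /= sub0r normrN ger0_norm.
have ind : forall i, Dh h xstar (xs (i + K)) <= Dh h xstar (xs K) /\
    i%:R * (f (xs (i + K)) - f xstar) <= L * (Dh h xstar (xs K) - Dh h xstar (xs (i + K))).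
  elim => [|i [IH1 IH2]].
    by split; [exact: lexx | rewrite mul0r subrr mulr0].
  have close_j : `|xs (i + K) - xstar| < eps / 2 := Hdel _ (le_lt_trans IH1 DK).
  have step_j : `|xs (i + K).+1 - xs (i + K)| < eps / 2 := HN1 _ (leq_trans KN1 (leq_addl i K)).
  have close : `|xs (i + K).+1 - xstar| < eps := tri_core _ _ _ _ step_j close_j.
  have T := tp (i + K) xstar (supp_close _ _ _ Heps close).
  exact: (ind_core i _ _ _ _ _ _ _ L0 T (fge _) (mono1 _) IH1 IH2).
exists (f xstar); split => //.
exists K.*2.+1, (2 * (L * Dh h xstar (xs K)) + 1); split.
  have := mulr_ge0 (ltW L0) (Dge0 xstar (xs K)); lra.
move=> k Hk.
have Kk : (K <= k)%N by apply: leq_trans Hk; rewrite -addnn; apply: leqW; apply: leq_addr.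
rewrite -(subnK Kk).
have [_ H2] := ind (k - K)%N.
apply: (final_core (k - K)%N K _ _ _ _ _ _ L0 (Dge0 _ _) (fge _) H2).
by rewrite subnK.
Unshelve. all: end_near.
Qed.
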